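(* Let $G=(V,E)$ be a finite, simple, connected graph on $n=n(G)$ vertices with minimum degree $\delta$ and maximum degree $\Delta\ge 2$. Then \[ Z(G)=F_1(G)\le \frac{(\Delta-2)\,n-(\Delta-\delta)+2}{\Delta-1}. \]
   Context: All graphs are finite, simple and undirected. A set $S\subseteq V$ is a zero forcing set ($1$-forcing set) of $G$ if the following process colors every vertex: initially the vertices of $S$ are colored and all others uncolored; repeatedly, whenever a colored vertex has exactly one uncolored neighbor (at most one uncolored neighbor), that neighbor becomes colored. The zero forcing number $Z(G)=F_1(G)$ is the minimum cardinality of a zero forcing set of $G$. *)

(* Defs.v *)
From mathcomp Require Import all_boot all_order all_algebra.
Set Implicit Arguments. Unset Strict Implicit. Unset Printing Implicit Defensive.

Definition simple_graph (T : finType) (e : rel T) : Prop :=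
  symmetric e /\ irreflexive e.

Definition nbhd (T : finType) (e : rel T) (v : T) : {set T} := [set w | e v w].
Definition deg (T : finType) (e : rel T) (v : T) : nat := #|nbhd e v|.

Definition connected (T : finType) (e : rel T) : Prop :=
  forall x y : T, connect e x y.

(* One (parallel) round of the zero forcing color change rule: a colored
   vertex v with exactly one uncolored neighbor w forces w. *)
Definition force_step (T : finType) (e : rel T) (C : {set T}) : {set T} :=
  C :|: [set w | [exists v, (v \in C) && (nbhd e v :\: C == [set w])]].

(* Final colored set (the process stabilises after at most #|T| rounds). *)
Definition force_closure (T : finType) (e : rel T) (S : {set T}) : {set T} :=
  iter #|T| (force_step e) S.

Definition zero_forcing_set (T : finType) (e : rel T) (S : {set T}) : bool :=
  force_closure e S == setT.

(* Zero forcing number: minimum cardinality of a zero forcing set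
   (setT is always one, so #|T| is a valid default). *)
Definition Z (T : finType) (e : rel T) : nat :=
  \big[minn/#|T|]_(S : {set T} | zero_forcing_set e S) #|S|.

Definition maxdeg (T : finType) (e : rel T) : nat := \max_(v : T) deg e v.
Definition mindeg (T : finType) (e : rel T) : nat :=
  \big[minn/maxdeg e]_(v : T) deg e v.

(* Main.v *)
Require Import Defs.
From mathcomp Require Import all_boot all_order all_algebra.
From mathcomp Require Import zify.
Import GRing.Theory Num.Theory.

Section Proof.
Variables (T : finType) (e : rel T).

Definition closedQ (Q : {set T}) : Prop :=
  forall v w, v \in Q -> nbhd e v :\: Q == [set w] -> w \in Q.

Lemma fs_sub (C : {set T}) : C \subset force_step e C.
Proof. exact: subsetUl. Qed.

Lemma fs_mono (C D : {set T}) : C \subset D -> force_step e C \subset force_step e D.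
Proof.
move=> CD; apply/subsetP => x; rewrite !inE => /orP[xC|/existsP[v /andP[vC /eqP Hv]]].
  by rewrite (subsetP CD x xC).
case xD: (x \in D) => //=.
apply/existsP; exists v; rewrite (subsetP CD v vC) /=.
apply/eqP/setP => y; rewrite !inE.
case: (boolP (y == x)) => [/eqP->|yx]; first by rewrite xD /=; have := Hv; move/setP/(_ x); rewrite !inE eqxx => /andP[].
apply/negbTE; apply/negP => /andP[yD ny].
have := Hv; move/setP/(_ y); rewrite !inE (negbTE yx) ny andbT.
by move/negbT; rewrite negbK => yC; rewrite (subsetP CD y yC) in yD.
Qed.

Lemma zfs_of (S : {set T}) : (forall Q : {set T}, S \subset Q -> closedQ Q -> Q = setT) ->
  zero_forcing_set e S.
Proof.
move=> H.
pose F' := fun X : {set T} => S :|: force_step e X.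
have Fm : {homo F' : X Y / X \subset Y}.
  by move=> X Y XY; apply: setUS; apply: fs_mono.
have K := fixsetK Fm.
have PT : fixset F' = setT.
  apply: H; first by rewrite -K subsetUl.
  move=> v w vP Hv; rewrite -K !inE; apply/orP; right; apply/orP; right.
  by apply/existsP; exists v; rewrite vP Hv.
have Sk k : S \subset iter k (force_step e) S.
  elim: k => //= k IH; exact: subset_trans IH (fs_sub _).
have Ik k : iter k F' set0 \subset iter k (force_step e) S.
  elim: k => [|k IH] /=; first exact: sub0set.
  apply/subUsetP; split; first exact: subset_trans (Sk k) (fs_sub _).
  exact: fs_mono.
rewrite /zero_forcing_set /force_closure eqEsubset subsetT /=.
by rewrite -PT; apply: Ik.
Qed.

Lemma crossing (C : {set T}) x y : x \in C -> y \notin C -> connect e x y ->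
  exists a b, [/\ a \in C, b \notin C & e a b].
Proof.
move=> xC yC /connectP[p]; elim: p x xC => [|z p IH] x xC /=.
  by move=> _ /= yx; subst y; rewrite xC in yC.
move=> /andP[exz pz] yl.
case: (boolP (z \in C)) => zC; first exact: IH zC pz yl.
by exists x, z.
Qed.


Hypothesis sym : symmetric e.
Hypothesis irr : irreflexive e.
Hypothesis conn : connected e.

Lemma deg_le w : (deg e w <= maxdeg e)%N.
Proof. rewrite /maxdeg; exact: (@leq_bigmax _ (fun v => deg e v) w). Qed.

Lemma grow k : forall C S : {set T}, (#|~: C| <= k)%N -> S \subset C ->
  (exists x0, x0 \in C) ->
  (forall Q : {set T}, S \subset Q -> closedQ Q -> C \subset Q) ->
  (forall w, w \in C -> exists2 x, x \in C & e w x) ->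
  (#|C| + maxdeg e <= (maxdeg e - 1) * #|C :\: S| + mindeg e + 2)%N ->
  exists S' : {set T}, zero_forcing_set e S' /\
    (#|T| + maxdeg e <= (maxdeg e - 1) * (#|T| - #|S'|) + mindeg e + 2)%N.
Proof.
elim: k => [|k IH] C S Hk SC [x0 x0C] HQ HI Hc.
- have CT : C = setT.
    by apply/setP => z; rewrite inE; apply/negPn/negP => zC; move: Hk; rewrite leqn0 cards_eq0 => /eqP /setP /(_ z); rewrite !inE zC.
  subst C; exists S; split.
    apply: zfs_of => Q SQ cQ; apply/eqP; rewrite eqEsubset subsetT /=; exact: HQ.
  by rewrite setTD (cardsCs (~: S)) setCK cardsT in Hc.
- case: (boolP (C == setT)) => [/eqP CT|CnT].
    subst C; exists S; split.
      apply: zfs_of => Q SQ cQ; apply/eqP; rewrite eqEsubset subsetT /=; exact: HQ.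
    by rewrite setTD (cardsCs (~: S)) setCK cardsT in Hc.
  have [y yC] : exists y, y \notin C.
    apply/existsP; move: CnT; apply: contraR; rewrite negb_exists => /forallP H.
    by apply/eqP/setP => z; rewrite inE; have := H z; rewrite negbK.
  have [w [u [wC uC ewu]]] := @crossing C x0 y x0C yC (conn x0 y).
  set U := nbhd e w :\: C.
  have uU : u \in U by rewrite !inE uC /=.
  have [x xC ewx] := HI w wC.
  have UN : U \proper nbhd e w.
    apply/properP; split; first exact: subsetDl.
    by exists x; rewrite !inE ?xC ?ewx.
  have cardU : (#|U| < maxdeg e)%N.
    exact: leq_trans (proper_card UN) (deg_le w).
  apply: (IH (C :|: U) (S :|: (U :\ u))).
  + rewrite -ltnS; apply: leq_trans Hk; apply: proper_card.
    apply/properP; split; first by rewrite setCS subsetUl.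
    by exists u; [rewrite inE | rewrite inE in_setU uU orbT].
  + by apply: setUSS => //; exact: subD1set.
  + by exists x0; rewrite inE x0C.
  + move=> Q SQ cQ.
    have SQ0 : S \subset Q by apply: subset_trans SQ; exact: subsetUl.
    have CQ := HQ Q SQ0 cQ.
    have UQ z : z \in U -> z != u -> z \in Q.
      by move=> zU zu; apply: (subsetP SQ); rewrite in_setU in_setD1 zu zU orbT.
    have uQ : u \in Q.
      apply/negPn/negP => uQ; apply: (negP uQ); apply: (cQ w); first exact: (subsetP CQ).
      apply/eqP/setP => z; rewrite !inE.
      case: (boolP (z == u)) => [/eqP->|zu]; first by rewrite ewu uQ.
      apply/negbTE/negP => /andP[zQ ewz]; apply: (negP zQ); apply: UQ zu.
      by rewrite !inE ewz andbT; apply/negP => zC; rewrite (subsetP CQ z zC) in zQ.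
    apply/subsetP => z; rewrite inE => /orP[zC|zU]; first exact: (subsetP CQ).
    by case: (boolP (z == u)) => [/eqP->//|zu]; apply: UQ.
  + move=> z; rewrite inE => /orP[zC|zU].
      by have [t tC ezt] := HI z zC; exists t => //; rewrite inE tC.
    by exists w; rewrite ?inE ?wC // sym; move: zU; rewrite !inE => /andP[_].
  + have cC' : #|C :|: U| = (#|C| + #|U|)%N.
      rewrite -cardsUI; suff -> : C :&: U = set0 by rewrite cards0 addn0.
      by apply/setP => z; rewrite !inE; case: (z \in C); rewrite ?andbF.
    have cD : #|(C :|: U) :\: (S :|: (U :\ u))| = (#|C :\: S|).+1.
      have -> : (C :|: U) :\: (S :|: (U :\ u)) = u |: (C :\: S).
        apply/setP => z; rewrite !inE.
        case: (boolP (z == u)) => [/eqP->|zu] /=.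
          rewrite (negbTE uC) /= orbF ewu andbT.
          by apply/negP => uS; rewrite (subsetP SC u uS) in uC.
        case zC: (z \in C) => /=; first by rewrite orbF andbT.
        by case: (e w z); rewrite ?orbT ?andbF.
      rewrite cardsU1 inE (negbTE uC) andbF /=. by rewrite add1n.
    rewrite cC' cD; lia.
Qed.
End Proof.

Local Open Scope ring_scope.

Theorem corollary1 (T : finType) (e : rel T) :
  simple_graph e -> connected e -> (2 <= maxdeg e)%N ->
  (Z e)%:Z * ((maxdeg e)%:Z - 1)
    <= ((maxdeg e)%:Z - 2) * (#|T|)%:Z - ((maxdeg e)%:Z - (mindeg e)%:Z) + 2.
Proof.
move=> [sym irr] conn D2.
have [a Ha] : exists a, (2 <= deg e a)%N.
  apply/existsP; apply: contraLR D2; rewrite negb_exists => /forallP H.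
  rewrite -ltnNge ltnS /maxdeg; apply/bigmax_leqP => i _.
  by have := H i; rewrite -ltnNge ltnS.
have [b eab] : exists b, e a b.
  have : (0 < #|nbhd e a|)%N by apply: leq_trans Ha.
  by rewrite card_gt0 => /set0Pn[b]; rewrite inE => ?; exists b.
have [v Hv] : exists v, (deg e v <= mindeg e)%N.
  rewrite /mindeg; apply: (big_ind (fun x => exists v, (deg e v <= x)%N)).
  - by exists a; apply: deg_le.
  - move=> x y [v1 H1] [v2 H2] /=; case: (leqP x y) => xy.
      by exists v1.
    by exists v2.
  - by move=> i _; exists i.
pose y := if v == a then b else a.
have yv : y \notin [set v].
  rewrite inE /y; case: (boolP (v == a)) => [/eqP->|va]; last by rewrite eq_sym.
  by apply/negP => /eqP ba; subst b; rewrite irr in eab.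
have [c [u [cv uv evu]]] := @crossing T e [set v] v y (set11 v) yv (conn v y).
move: cv; rewrite inE => /eqP ?; subst c.
have uv' : u != v by move: uv; rewrite inE.
pose C0 := v |: nbhd e v.
pose S0 := C0 :\ u.
have uC0 : u \in C0 by rewrite !inE evu orbT.
have vS0 : v \in S0 by rewrite !inE eq_sym uv' eqxx.
have [S' [zS' cS']] : exists S' : {set T}, zero_forcing_set e S' /\
    (#|T| + maxdeg e <= (maxdeg e - 1) * (#|T| - #|S'|) + mindeg e + 2)%N.
  apply: (@grow T e sym conn #|~: C0| C0 S0 (leqnn _)).
  - exact: subD1set.
  - by exists v; rewrite !inE eqxx.
  - move=> Q SQ cQ.
    have uQ : u \in Q.
      apply/negPn/negP => uQ; apply: (negP uQ); apply: (cQ v); first exact: (subsetP SQ).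
      apply/eqP/setP => z; rewrite !inE.
      case: (boolP (z == u)) => [/eqP->|zu]; first by rewrite evu uQ.
      apply/negbTE/negP => /andP[zQ evz]; apply: (negP zQ); apply: (subsetP SQ).
      by rewrite !inE zu evz orbT.
    apply/subsetP => z zC; case: (boolP (z == u)) => [/eqP->//|zu].
    by apply: (subsetP SQ); rewrite in_setD1 zu zC.
  - move=> z; rewrite !inE => /orP[/eqP->|evz]; first by exists u.
    by exists v; rewrite ?inE ?eqxx // sym.
  - have c1 : #|C0| = (deg e v).+1.
      by rewrite cardsU1 inE irr.
    have c2 : #|C0 :\: S0| = 1%N.
      have -> : C0 :\: S0 = [set u].
        apply/setP => z; rewrite !inE.
        case: (boolP (z == u)) => [/eqP->|zu] /=; first by rewrite evu orbT.
        by case: ((z == v) || e v z).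
      exact: cards1.
    rewrite c1 c2; lia.
have ZS : (Z e <= #|S'|)%N.
  rewrite /Z.
  have : S' \in index_enum {set T} by rewrite mem_index_enum.
  elim: (index_enum _) => [//|t s IH]; rewrite inE big_cons => /orP[/eqP<-|Hs].
    by rewrite zS'; apply: geq_minl.
  case: ifP => _; last exact: IH.
  by rewrite geq_min IH ?orbT.
have ST : (#|S'| <= #|T|)%N by apply: max_card.
have H : (Z e * (maxdeg e - 1) + #|T| + maxdeg e <= (maxdeg e - 1) * #|T| + mindeg e + 2)%N.
  move: D2 ZS ST cS'; generalize (Z e) (maxdeg e) (mindeg e) #|T| #|S'|.
  move=> z D d n s H1 H2 H3 H4; clear -H1 H2 H3 H4; nia.
move: D2 H; generalize (Z e) (maxdeg e) (mindeg e) #|T|.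
move=> z D d n H1 H2; clear -H1 H2; lia.
Qed.
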